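(* Let $L_{n+1},\dots,L_{n+m}\ge 0$ be nonnegative random risks and let $E_{n+1},\dots,E_{n+m}$ be random variables with $E_{n+j}\ge 0$ a.s. and $\mathbb{E}[E_{n+j}L_{n+j}]\le 1$ for every $j\in\{1,\dots,m\}$. Fix $\alpha\in(0,1)$ and let $\hat\tau=\max\{\tau\in\{1,\dots,m\}:\sum_{j=1}^m\mathbf{1}\{E_{n+j}\ge m/(\alpha\tau)\}\ge\tau\}$ (with $\hat\tau=0$ if this set is empty), and set $\hat\psi_{n+j}=\mathbf{1}\{E_{n+j}\ge m/(\alpha\hat\tau)\}$ if $\hat\tau>0$ and $\hat\psi_{n+j}=0$ for all $j$ if $\hat\tau=0$ (this is the e-BH procedure at level $\alpha$). Then $$\mathbb{E}\Big[\frac{\sum_{j=1}^m L_{n+j}\hat\psi_{n+j}}{1\vee\sum_{j=1}^m\hat\psi_{n+j}}\Big]\le\alpha.$$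
   Context: The left-hand side is the selective deployment risk (SDR) of the decisions $\hat\psi_{n+1},\dots,\hat\psi_{n+m}$. *)

(* Defs.v *)
From HB Require Import structures.
From mathcomp Require Import all_boot all_order all_algebra.
From mathcomp Require Import all_classical all_reals all_analysis.
Set Implicit Arguments. Unset Strict Implicit. Unset Printing Implicit Defensive.
Import Order.TTheory GRing.Theory Num.Theory.
Local Open Scope ring_scope.

Definition ebh_count (R : realType) (m : nat) (alpha : R) (e : 'I_m -> R) (tau : nat) : nat :=
  #|[set j : 'I_m | m%:R / (alpha * tau%:R) <= e j]|.

Definition ebh_tau (R : realType) (m : nat) (alpha : R) (e : 'I_m -> R) : nat :=
  (\max_(t < m.+1 | (0 < (t : nat))%N && ((t : nat) <= ebh_count alpha e t)%N) (t : nat))%N.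

Definition ebh_psi (R : realType) (m : nat) (alpha : R) (e : 'I_m -> R) (j : 'I_m) : bool :=
  if (0 < ebh_tau alpha e)%N
  then m%:R / (alpha * (ebh_tau alpha e)%:R) <= e j
  else false.

Definition sdr_integrand (R : realType) (m : nat) (alpha : R)
    (e : 'I_m -> R) (l : 'I_m -> R) : R :=
  (\sum_(j < m) l j * (ebh_psi alpha e j)%:R) /
  Num.max 1 (\sum_(j < m) (ebh_psi alpha e j)%:R).

(* Main.v *)
Require Import Defs.
From HB Require Import structures.
From mathcomp Require Import all_boot all_order all_algebra.
From mathcomp Require Import all_classical all_reals all_analysis.
From mathcomp Require Import ring lra measurable_realfun.
Import Order.TTheory GRing.Theory Num.Theory.
Local Open Scope ring_scope.
Local Open Scope classical_set_scope.
Import HBNNSimple.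

Lemma le_int_nomeas d (T : measurableType d) (R : realType)
  (mu : {measure set T -> \bar R}) (f1 f2 : T -> \bar R) :
  (forall x, 0 <= f1 x)%E -> (forall x, f1 x <= f2 x)%E ->
  (\int[mu]_x f1 x <= \int[mu]_x f2 x)%E.
Proof.
move=> f10 f12.
have f20 x : (0 <= f2 x)%E by exact: le_trans (f10 x) (f12 x).
rewrite !ge0_integralTE //.
apply: ge_ereal_sup => _ [h /= hf <-].
apply: le_ereal_sup_tmp; exists (sintegral mu h) => //.
by exists h => // x; exact: le_trans (hf x) (f12 x).
Qed.

Lemma tau_prop (R : realType) (m : nat) (alpha : R) (e : 'I_m -> R) :
  (ebh_tau alpha e <= m)%N /\
  (ebh_tau alpha e = 0%N \/ (ebh_tau alpha e <= ebh_count alpha e (ebh_tau alpha e))%N).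
Proof.
rewrite /ebh_tau.
apply: (big_ind (fun x => (x <= m)%N /\ (x = 0%N \/ (x <= ebh_count alpha e x)%N))).
- by split => //; left.
- move=> x y [xm Hx] [ym Hy]; split; first by rewrite geq_max xm ym.
  by case: (leqP x y).
- move=> t /andP[t0 tc]; split; [exact: (ltn_ord t) | by right].
Qed.

Lemma pointwise (R : realType) (m : nat) (alpha : R) (e l : 'I_m -> R) :
  0 < alpha -> (forall j, 0 <= l j) ->
  sdr_integrand alpha e l <= \sum_(j < m) alpha / m%:R * (Num.max (e j) 0 * l j).
Proof.
move=> a0 l0.
have rhs0 : 0 <= \sum_(j < m) alpha / m%:R * (Num.max (e j) 0 * l j).
  apply: sumr_ge0 => j _; apply: mulr_ge0; first by rewrite divr_ge0 // ltW.
  by apply: mulr_ge0 => //; rewrite le_max lexx orbT.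
rewrite /sdr_integrand.
have [tm tc] := @tau_prop _ _ alpha e.
case: (posnP (ebh_tau alpha e)) => [t0|tpos].
  rewrite big1 ?mul0r // => j _; by rewrite /ebh_psi t0 /= mulr0.
case: tc => [t0|tc]; first by rewrite t0 in tpos.
move: tm tc tpos; set t := ebh_tau alpha e => tm tc tpos.
set c := m%:R / (alpha * t%:R).
have psiE j : ebh_psi alpha e j = (c <= e j) by rewrite /ebh_psi -/t tpos.
have K : \sum_(j < m) (ebh_psi alpha e j)%:R = (ebh_count alpha e t)%:R :> R.
  rewrite /ebh_count -sum1_card natr_sum [RHS]big_mkcond /=.
  by apply: eq_bigr => j _; rewrite psiE inE; case: ifP.
rewrite K.
have tR : (0:R) < t%:R by rewrite ltr0n.
have tK : (t%:R : R) <= (ebh_count alpha e t)%:R by rewrite ler_nat.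
have KR : 0 < ((ebh_count alpha e t)%:R : R) by apply: lt_le_trans tK.
have -> : Num.max 1 ((ebh_count alpha e t)%:R : R) = (ebh_count alpha e t)%:R.
  apply/max_idPr; apply: le_trans tK; by rewrite ler1n.
have mR : (0:R) < m%:R by rewrite ltr0n; apply: leq_trans tm.
rewrite mulr_suml; apply: ler_sum => j _; rewrite psiE.
case: (boolP (c <= e j)) => h /=; last first.
  rewrite mulr0 mul0r; apply: mulr_ge0; first by rewrite divr_ge0 // ltW.
  by apply: mulr_ge0 => //; rewrite le_max lexx orbT.
rewrite mulr1 mulrC [in leRHS]mulrC mulrA.
have -> : Num.max (e j) 0 * l j * alpha / m%:R = alpha / m%:R * Num.max (e j) 0 * l j by ring.
apply: ler_wpM2r => //.
have hc : c <= Num.max (e j) 0 by rewrite le_max h.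
apply: le_trans (ler_wpM2l _ hc); last by rewrite divr_ge0 // ltW.
rewrite /c.
have -> : alpha / m%:R * (m%:R / (alpha * t%:R)) = t%:R^-1.
  by field; rewrite ?lt0r_neq0 //; apply/andP; split; rewrite lt0r_neq0.
by rewrite lef_pV2 ?posrE.
Qed.

Lemma sdr_ge0 (R : realType) (m : nat) (alpha : R) (e l : 'I_m -> R) :
  (forall j, 0 <= l j) -> 0 <= sdr_integrand alpha e l.
Proof.
move=> l0; rewrite /sdr_integrand; apply: divr_ge0.
  by apply: sumr_ge0 => j _; apply: mulr_ge0.
by rewrite le_max ler01.
Qed.

Theorem theorem3p2 (d : measure_display) (T : measurableType d) (R : realType)
  (P : probability T R) (m : nat) (L E : 'I_m -> T -> R) (alpha : R)
  (L_meas : forall j, measurable_fun setT (L j))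
  (E_meas : forall j, measurable_fun setT (E j))
  (L_ge0 : forall j x, 0 <= L j x)
  (E_ge0 : forall j, {ae P, forall x, 0 <= E j x})
  (EL_le1 : forall j, (\int[P]_x ((E j x * L j x)%:E) <= 1)%E)
  (alpha_gt0 : 0 < alpha) (alpha_lt1 : alpha < 1) :
  (\int[P]_x ((sdr_integrand alpha (fun j => E j x) (fun j => L j x))%:E)
     <= alpha%:E)%E.
Proof.
have c0 : (0:R) <= alpha / m%:R by rewrite divr_ge0 // ltW.
have mx0 j x : (0:R) <= Num.max (E j x) 0 * L j x.
  by apply: mulr_ge0 => //; rewrite le_max lexx orbT.
have mmx j : measurable_fun setT (EFin \o (fun x : T => (Num.max (E j x) 0 * L j x))).
  apply/measurable_EFinP; apply: measurable_funM => //.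
  by apply: measurable_maxr => //; exact: measurable_cst.
apply: (le_trans (@le_int_nomeas _ _ _ P _ (fun x =>
   (\sum_(j < m) alpha / m%:R * (Num.max (E j x) 0 * L j x))%:E) _ _)).
- by move=> x; rewrite lee_fin; apply: sdr_ge0.
- by move=> x; rewrite lee_fin; apply: pointwise.
under eq_integral do rewrite -sumEFin.
rewrite ge0_integral_sum //; last first.
  by move=> j x _; rewrite lee_fin; apply: mulr_ge0.
  move=> j; apply/measurable_EFinP; apply: measurable_funM.
    exact: measurable_cst.
  by apply/measurable_EFinP; exact: mmx.
apply: (@le_trans _ _ (\sum_(j < m) (alpha / m%:R)%:E)%E).
  apply: lee_sum => j _.
  under eq_integral do rewrite EFinM.
  have h0 : forall x, [set: T] x -> (0 <= (Num.max (E j x) 0 * L j x)%:E)%E.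
    by move=> x _; rewrite lee_fin.
  rewrite (ge0_integralZl_EFin P measurableT h0 (mmx j) c0).
  rewrite -[leRHS]mule1; apply: lee_wpmul2l; first by rewrite lee_fin.
  apply: le_trans (EL_le1 j); rewrite le_eqVlt; apply/orP; left; apply/eqP.
  apply: ae_eq_integral; [exact: measurableT | exact: (mmx j) | | ].
  - apply/measurable_EFinP; exact: measurable_funM.
  - rewrite /ae_eq; apply: filterS (E_ge0 j) => x h _.
    by congr (_%:E); congr (_ * _); apply/max_idPl.
rewrite sumEFin lee_fin sumr_const card_ord.
case: m {L E L_meas E_meas L_ge0 E_ge0 EL_le1 c0 mx0 mmx} => [|n]; first by rewrite mulr0n ltW.
by rewrite -[leLHS]mulr_natr divfK // pnatr_eq0.
Qed.
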